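(* Let $a,b$ be positive integers with $a > b > 0$, $\gcd(a,b)=1$ and $a \not\equiv b \pmod 2$, and put $$N_{1,7} = (a+b)^2 - 2b^2,\qquad N_{1,5} = a^2+b^2,\qquad N_{1,3} = (a-b)^2+2b^2 .$$ Then $N_{1,3}, N_{1,5}, N_{1,7}$ are pairwise relatively prime: $\gcd(N_{1,5},N_{1,7}) = \gcd(N_{1,3},N_{1,5}) = \gcd(N_{1,3},N_{1,7}) = 1$. *)

(* Defs.v *)
From mathcomp Require Import all_boot.
(* Natural-number setting (ssrnat). Since a > b > 0, the subtractions
   a - b and (a+b)^2 - 2 b^2 are not truncated. *)
Definition N17 (a b : nat) : nat := (a + b) ^ 2 - 2 * b ^ 2.
Definition N15 (a b : nat) : nat := a ^ 2 + b ^ 2.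
Definition N13 (a b : nat) : nat := (a - b) ^ 2 + 2 * b ^ 2.

(* Main.v *)
Require Import Defs.
From mathcomp Require Import all_boot.
From mathcomp Require Import zify.

Lemma gcd1 x y : 0 < x -> (forall p, prime p -> p %| x -> p %| y -> False) -> gcdn x y = 1.
Proof.
move=> x0 H.
have g0 : 0 < gcdn x y by rewrite gcdn_gt0 x0.
case: (ltngtP (gcdn x y) 1) => // [|g1]; first by move: g0; lia.
have pp := pdiv_prime g1.
have pd := pdiv_dvd (gcdn x y).
exfalso; apply: (H _ pp).
  exact: dvdn_trans pd (dvdn_gcdl _ _).
exact: dvdn_trans pd (dvdn_gcdr _ _).
Qed.

Lemma key (p c b : nat) : prime p -> ~~ (p %| 2) -> coprime (c+b) b ->
  p %| c^2 + 2*b^2 -> p %| c*b -> False.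
Proof.
move=> pp p2 cop hX.
have hb : p %| b -> p %| c+b -> False.
  move=> h1 h2.
  have : p %| gcdn (c+b) b by rewrite dvdn_gcd h1 h2.
  rewrite (eqP cop) dvdn1 => /eqP p1; by rewrite p1 in pp.
rewrite Euclid_dvdM // => /orP [hc|hb'].
  have h2 : p %| 2*b^2 by rewrite -(dvdn_addr _ (dvdn_mull 1 (dvdn_exp (isT : 0 < 2) hc))) mul1n.
  rewrite Euclid_dvdM // (negbTE p2) /= Euclid_dvdX // andbT in h2.
  by apply: hb => //; rewrite dvdn_addr.
have h2 : p %| c^2 by rewrite -(dvdn_addl _ (dvdn_mull 2 (dvdn_exp (isT : 0 < 2) hb'))).
rewrite Euclid_dvdX // andbT in h2.
by apply: hb => //; rewrite dvdn_addr.
Qed.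

Theorem theorem4p2 (a b : nat) :
  0 < b -> b < a -> coprime a b -> odd a != odd b ->
  [/\ gcdn (N15 a b) (N17 a b) = 1,
      gcdn (N13 a b) (N15 a b) = 1 &
      gcdn (N13 a b) (N17 a b) = 1].
Proof.
move=> b0 ba cop od.
have [c ac] : exists c, a = c + b by exists (a - b); rewrite subnK // ltnW.
subst a.
have oc : odd c by move: od; rewrite oddD; case: (odd c); case: (odd b).
set X := c^2 + 2*b^2.
have E13 : N13 (c+b) b = X by rewrite /N13 addnK.
have E15 : N15 (c+b) b = X + 2*(c*b) by rewrite /N15 /X; nia.
have E17 : N17 (c+b) b = X + 2*(2*(c*b)) by rewrite /N17 /X; nia.
have Xodd : odd X by rewrite /X oddD oddM oddX oc.
have p2 : forall p, prime p -> p %| X -> ~~ (p %| 2).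
  move=> p pp hX; apply/negP => h2.
  have p2 : p = 2.
    have := prime_gt1 pp; have := dvdn_leq (isT : 0 < 2) h2; lia.
  by move: hX; rewrite p2 dvdn2 Xodd.
have X0 : 0 < X by rewrite lt0n; apply/eqP => h; rewrite h in Xodd.
split; apply: gcd1.
- by rewrite E15 ltn_addr.
- move=> p pp; rewrite E15 E17 => h1 h2.
  have hX : p %| X.
    have h3 : p %| 2*(c*b).
      have : p %| X + 2*(c*b) + 2*(c*b) by rewrite -addnA addnn -mul2n.
      by rewrite dvdn_addr.
    by rewrite -(dvdn_addl _ h3).
  apply: (@key p c b pp (p2 _ pp hX) cop hX).
  have h3 : p %| 2*(c*b) by rewrite -(dvdn_addr _ hX).
  by rewrite Euclid_dvdM // (negbTE (p2 _ pp hX)) in h3.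
- by rewrite E13.
- move=> p pp; rewrite E13 E15 => hX h2.
  apply: (@key p c b pp (p2 _ pp hX) cop hX).
  have h3 : p %| 2*(c*b) by rewrite -(dvdn_addr _ hX).
  by rewrite Euclid_dvdM // (negbTE (p2 _ pp hX)) in h3.
- by rewrite E13.
- move=> p pp; rewrite E13 E17 => hX h2.
  apply: (@key p c b pp (p2 _ pp hX) cop hX).
  have h3 : p %| 2*(2*(c*b)) by rewrite -(dvdn_addr _ hX).
  have h4 : p %| 2*(c*b) by move: h3; rewrite Euclid_dvdM // (negbTE (p2 _ pp hX)).
  by rewrite Euclid_dvdM // (negbTE (p2 _ pp hX)) in h4.
Qed.
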